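(* Let $m=2^\theta\mu$ with $\theta\ge1$ and $\mu$ odd. The graph $\mathcal{A}_\mu$ is a disjoint union of directed cycles. The graph $\mathcal{A}_m$ is isomorphic to the graph obtained from $\mathcal{A}_\mu$ by replacing each cycle of length $\alpha$ by a copy of the flower cycle $C_\alpha(T_2^\theta)$. Equivalently, $\mathcal{A}_m$ is the disjoint union over the cycles of $\mathcal{A}_\mu$ of graphs $C_\alpha(T_2^\theta)$, where $\alpha$ is the length of the corresponding cycle.
   Context: For a positive integer $m$, $\mathcal{A}_m$ is the directed graph on $\{0,\dots,m-1\}$ with an edge $x\to 2x\bmod m$ for each $x$. A grounded tree is a finite directed graph in which every vertex has out-degree one, a root vertex has a loop, the graph is a tree after deleting this loop, and every vertex has a directed path to the root. The regular grounded tree $T_w^\ell$ ($w\ge1,\ell\ge1$) has $w^\ell$ vertices in layers $0,\dots,\ell$. Layer $0$ is the root, with a loop. Layer $1$ has $w-1$ vertices mapping to the root. Each vertex of layer $j<\ell$, $j\ge1$, has exactly $w$ vertices of layer $j+1$ mapping to it. Layer $\ell$ consists of leaves. For $\alpha\ge1$ and a grounded tree $T$, the flower cycle $C_\alpha(T)$ is built as follows: take $\alpha$ disjoint copies of $T$, delete the root loops, and add an edge from the root of copy $i$ to the root of copy $i+1$, with indices mod $\alpha$. *)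

(* Defs.v *)
(* Directed graphs with out-degree one are represented as
   functional graphs: a finite vertex type V and a map f : V -> V, the edges
   being x -> f x (the relation [frel f]). *)
From mathcomp Require Import all_boot.
Set Implicit Arguments. Unset Strict Implicit. Unset Printing Implicit Defensive.

Definition fg_iso (V W : finType) (f : V -> V) (g : W -> W) : Prop :=
  exists phi : V -> W, bijective phi /\
    forall x y : V, frel f x y = frel g (phi x) (phi y).

(* The graph A_m on {0,...,m-1} with edges x -> 2x mod m. *)
Lemma dbl_lt m (x : 'I_m) : x.*2 %% m < m.
Proof. by apply: ltn_pmod; apply: leq_ltn_trans (ltn_ord x). Qed.
Definition dbl m (x : 'I_m) : 'I_m := Ordinal (dbl_lt x).

(* "Disjoint union of directed cycles": every vertex lies on a directed cycle,
   i.e. x is reachable from its successor f x (out-degree is one everywhere). *)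
Definition union_of_cycles (V : finType) (f : V -> V) : Prop :=
  forall x : V, fconnect f (f x) x.

(* The (vertex sets of the) cycles / connected components: the set of
   forward orbits {y | x ->* y}. When f is a union of cycles these are
   exactly the vertex sets of its cycles. *)
Definition cycles_of (V : finType) (f : V -> V) : {set {set V}} :=
  [set [set y | fconnect f x y] | x : V].
Definition cycle_idx (V : finType) (f : V -> V) : finType :=
  {C : {set V} | C \in cycles_of f}.
Definition cycle_len (V : finType) (f : V -> V) (C : cycle_idx f) : nat :=
  #|val C|.

(* The regular grounded tree T_w^l, concretely: vertices 0 .. w^l - 1,
   edge v -> v %/ w.  Root 0 (loop); layer j >= 1 is [w^(j-1), w^j):
   layer 1 = {1..w-1} (w-1 vertices mapping to 0); every vertex v of layer
   j in [1,l) has exactly the w children w*v, ..., w*v + w - 1 in layer j+1;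
   layer l = [w^(l-1), w^l) consists of leaves. *)
Definition rt_V (w l : nat) : finType := 'I_(w ^ l).
Lemma rt_lt w l (v : 'I_(w ^ l)) : v %/ w < w ^ l.
Proof. exact: leq_ltn_trans (leq_div v w) (ltn_ord v). Qed.
Definition rt_f (w l : nat) (v : rt_V w l) : rt_V w l := Ordinal (rt_lt v).
Lemma rt_pos w l : 0 < w -> 0 < w ^ l.
Proof. by move=> hw; rewrite expn_gt0 hw. Qed.
Definition rt_root (w l : nat) (hw : 0 < w) : rt_V w l := Ordinal (rt_pos l hw).

Lemma two_pos : 0 < 2. Proof. by []. Qed.

(* Flower cycle C_alpha(T) for a grounded tree T = (V, f, r):
   vertices (i, v) with i : 'I_alpha the copy index; the root loop of copy i
   is replaced by an edge to the root of copy i+1 (mod alpha). *)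
Definition flower_V (alpha : nat) (V : finType) : finType := ('I_alpha * V)%type.
Definition flower_f (alpha : nat) (V : finType) (f : V -> V) (r : V)
  (p : flower_V alpha V) : flower_V alpha V :=
  if p.2 == r then (ordS p.1, r) else (p.1, f p.2).

Definition dsum_f (I : finType) (T_ : I -> finType) (f_ : forall i, T_ i -> T_ i)
  (p : {i : I & T_ i}) : {i : I & T_ i} :=
  Tagged T_ (f_ (tag p) (tagged p)).

(* Main.v *)
Require Import Defs.
From mathcomp Require Import all_boot zify.
Set Implicit Arguments. Unset Strict Implicit. Unset Printing Implicit Defensive.

Lemma fg_isoP (V W : finType) (f : V -> V) (g : W -> W) (phi : V -> W) :
  bijective phi -> (forall x, phi (f x) = g (phi x)) -> fg_iso f g.
Proof. by move=> bij comm; exists phi; split=> // x y /=; rewrite -comm (bij_eq bij). Qed.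

Lemma cidx_mem (V : finType) (f : V -> V) (x : V) :
  [set y | fconnect f x y] \in cycles_of f.
Proof. by apply/imsetP; exists x. Qed.

Definition cidx (V : finType) (f : V -> V) (x : V) : cycle_idx f :=
  exist _ [set y | fconnect f x y] (cidx_mem f x).

Lemma rep_ex (V : finType) (f : V -> V) (C : cycle_idx f) :
  exists x, val C == [set y | fconnect f x y].
Proof. by case: C => /= C /imsetP [x _ ->]; exists x. Qed.

Definition rep (V : finType) (f : V -> V) (C : cycle_idx f) : V := xchoose (rep_ex C).

Lemma repP (V : finType) (f : V -> V) (C : cycle_idx f) :
  val C = [set y | fconnect f (rep C) y].
Proof. by apply/eqP; exact: (xchooseP (rep_ex C)). Qed.

Lemma len_order (V : finType) (f : V -> V) (C : cycle_idx f) :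
  cycle_len C = order f (rep C).
Proof. by rewrite /cycle_len repP /order cardsE. Qed.

Lemma len_pos (V : finType) (f : V -> V) (C : cycle_idx f) : 0 < cycle_len C.
Proof. by rewrite len_order order_gt0. Qed.

Definition ordmod (V : finType) (f : V -> V) (C : cycle_idx f) (n : nat) :
  'I_(cycle_len C) := Ordinal (ltn_pmod n (len_pos C)).

Definition pos (V : finType) (f : V -> V) (y : V) : nat := findex f (rep (cidx f y)) y.

Lemma cidx_eq (V : finType) (f : V -> V) (finj : injective f) x y :
  fconnect f x y -> cidx f x = cidx f y.
Proof.
move=> xy; apply: val_inj => /=; apply/setP => z; rewrite !inE.
apply/idP/idP => h; last exact: connect_trans xy h.
by apply: connect_trans h; rewrite fconnect_sym.
Qed.

Lemma cidx_rep (V : finType) (f : V -> V) (C : cycle_idx f) : cidx f (rep C) = C.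
Proof. by apply: val_inj; rewrite /= -repP. Qed.

Lemma conn_rep (V : finType) (f : V -> V) (finj : injective f) y :
  fconnect f (rep (cidx f y)) y.
Proof.
have := repP (cidx f y) => /setP /(_ y); rewrite /= !inE connect0 => h.
by rewrite -h.
Qed.

Lemma pos_f (V : finType) (f : V -> V) (finj : injective f) y :
  pos f (f y) = (pos f y).+1 %% cycle_len (cidx f y).
Proof.
rewrite /pos -(cidx_eq finj (fconnect1 f y)) len_order.
set c := rep _.
have cy := conn_rep finj y; rewrite -/c in cy.
have lt := findex_max cy.
rewrite -{1}(iter_findex cy) -iterS.
move: lt; rewrite leq_eqVlt => /orP [/eqP e|lt].
  by rewrite e (iter_order finj) modnn findex0.
by rewrite findex_iter // modn_small.
Qed.

Lemma iter_can (T : Type) (f g : T -> T) n : cancel f g -> cancel (iter n f) (iter n g).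
Proof.
move=> fK; elim: n => // n IH x.
by rewrite [iter n.+1 f x]iterSr [iter n.+1 g _]iterS IH fK.
Qed.

Definition depth (W : finType) (g : W -> W) (r : W)
  (ground : forall t, exists n, iter n g t == r) (t : W) : nat := ex_minn (ground t).

Lemma depth_r (W : finType) (g : W -> W) (r : W) ground :
  g r = r -> @depth W g r ground r = 0.
Proof.
move=> gr; rewrite /depth; case: ex_minnP => n _ min.
by apply/eqP; rewrite -leqn0; apply: min.
Qed.

Lemma depth_g (W : finType) (g : W -> W) (r : W) ground t :
  t != r -> @depth W g r ground t = (@depth W g r ground (g t)).+1.
Proof.
move=> tr; rewrite /depth; case: ex_minnP => n Pn min; case: ex_minnP => k Pk mink.
case: n Pn min => [|n] Pn min; first by rewrite /= (negbTE tr) in Pn.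
congr _.+1; apply/eqP; rewrite eqn_leq; apply/andP; split.
  by rewrite -ltnS; apply: min; rewrite iterSr.
by apply: mink; rewrite -iterSr.
Qed.

Definition prodf (A B : Type) (f : A -> A) (g : B -> B) (p : A * B) : A * B :=
  (f p.1, g p.2).

Definition mkF (V W : finType) (f : V -> V) (C : cycle_idx f) (n : nat) (t : W) :
  {C : cycle_idx f & flower_V (cycle_len C) W} :=
  @Tagged _ C (fun C => flower_V (cycle_len C) W) (ordmod C n, t).

Definition Phi (V W : finType) (f : V -> V) (g : W -> W) (r : W) ground (p : V * W) :=
  mkF (cidx f p.1) (pos f (iter (@depth W g r ground p.2) f p.1)) p.2.

Definition Psi (V W : finType) (f : V -> V) (g : W -> W) (r : W) ground
  (p : {C : cycle_idx f & flower_V (cycle_len C) W}) : V * W :=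
  (iter (@depth W g r ground (tagged p).2) (finv f) (iter (tagged p).1 f (rep (tag p))),
   (tagged p).2).

Lemma generic (V W : finType) (f : V -> V) (finj : injective f) (g : W -> W) (r : W)
  (gr : g r = r) (ground : forall t, exists n, iter n g t == r) :
  bijective (@Phi V W f g r ground) /\
  forall p, @Phi V W f g r ground (prodf f g p) =
    @dsum_f (cycle_idx f) (fun C => flower_V (cycle_len C) W)
       (fun C => @flower_f (cycle_len C) W g r) (@Phi V W f g r ground p).
Proof.
split.
  exists (@Psi V W f g r ground).
    case=> x t; rewrite /Phi /Psi /=.
    set d := depth ground t.
    set y := iter d f x.
    have xy : fconnect f x y by apply: fconnect_iter.
    rewrite /pos (cidx_eq finj xy).
    have cy := conn_rep finj y.
    rewrite modn_small; last by rewrite len_order; exact: findex_max.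
    by rewrite iter_findex // iter_can //; apply: finv_f.
  case=> C [i t]; rewrite /Phi /Psi /=.
  set d := depth ground t.
  set y := iter i f (rep C).
  set x := iter d (finv f) y.
  have e : iter d f x = y.
    rewrite /x; elim: (d) (y) => // n IH z.
    by rewrite iterS [iter n.+1 (finv f) z]iterSr IH f_finv.
  rewrite e.
  have cxy : cidx f x = C.
    have xy : fconnect f x y by rewrite -e fconnect_iter.
    rewrite (cidx_eq finj xy).
    by rewrite /y -(cidx_eq finj (fconnect_iter f i (rep C))) cidx_rep.
  rewrite /mkF cxy; congr Tagged; congr (_, _); apply: val_inj => /=.
  rewrite /pos /y -(cidx_eq finj (fconnect_iter f i (rep C))) cidx_rep findex_iter.
    by rewrite modn_small.
  by rewrite -len_order.
case=> x t; rewrite /Phi /prodf /= -(cidx_eq finj (fconnect1 f x)).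
rewrite /mkF /dsum_f /= /flower_f /=.
case: eqP => [->|/eqP tr].
  rewrite gr !depth_r //= ; congr Tagged; congr (_, _); apply: val_inj => /=.
  rewrite pos_f //; move: (pos f x) (cycle_len _) => a L.
  by rewrite modn_mod -addn1 -[(a %% L).+1]addn1 modnDml.
rewrite (depth_g ground tr) iterS -iterSr.
by [].
Qed.
Fixpoint revb (n t : nat) : nat :=
  match n with 0 => 0 | n'.+1 => (revb n' t).*2 + odd (t %/ 2 ^ n') end.

Lemma revb_lt n t : revb n t < 2 ^ n.
Proof.
elim: n => //= n IH; rewrite expnS.
move: IH; case: (odd _); rewrite -!muln2 /=; lia.
Qed.

Lemma bit_mod s k i : i < k -> odd ((s %% 2 ^ k) %/ 2 ^ i) = odd (s %/ 2 ^ i).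
Proof.
move=> ik; rewrite {2}(divn_eq s (2 ^ k)).
have -> : 2 ^ k = 2 ^ (k - i) * 2 ^ i by rewrite -expnD subnK // ltnW.
rewrite mulnA divnMDl ?expn_gt0 // oddD oddM.
by rewrite -(subnSK ik) expnS oddM /= andbF.
Qed.

Lemma revb_mod n k s : n <= k -> revb n (s %% 2 ^ k) = revb n s.
Proof.
elim: n => // n IH nk.
have nk' : n <= k by apply: ltnW.
by rewrite /= (IH nk') (bit_mod _ nk).
Qed.


Lemma revb_dbl n t : revb n ((t.*2) %% 2 ^ n) = (revb n t)./2.
Proof.
elim: n t => [|n IH] t; first by [].
rewrite [LHS]/= (revb_mod _ (leqnSn n)) -(revb_mod _ (leqnn n)) IH (bit_mod _ (ltnSn n)).
rewrite [revb n.+1 t]/= [in RHS]addnC half_bit_double.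
case: n IH => [|k] IH; first by rewrite /= expn0 divn1 odd_double.
rewrite [revb k.+1 t]/= [_ + odd (t %/ _)]addnC half_bit_double addnC.
by rewrite -muln2 expnS mulnC divnMl.
Qed.

Lemma revb_inj n s t : s < 2 ^ n -> t < 2 ^ n -> revb n s = revb n t -> s = t.
Proof.
elim: n s t => [|n IH] s t.
  by rewrite expn0; case: s => [|?]; case: t => [|?].
move=> hs ht /= e.
have eo : odd (s %/ 2 ^ n) = odd (t %/ 2 ^ n).
  by move: (congr1 odd e); rewrite !oddD !odd_double !oddb.
have eh : revb n s = revb n t.
  move: (congr1 half e).
  by rewrite [_ + odd (s %/ _)]addnC [_ + odd (t %/ _)]addnC !half_bit_double.
have em : s %% 2 ^ n = t %% 2 ^ n.
  apply: IH.
  - by apply: ltn_pmod; rewrite expn_gt0.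
  - by apply: ltn_pmod; rewrite expn_gt0.
  by rewrite (revb_mod s (leqnn n)) (revb_mod t (leqnn n)).
have small x : x < 2 ^ n.+1 -> x %/ 2 ^ n = odd (x %/ 2 ^ n).
  rewrite expnS -ltn_divLR ?expn_gt0 //.
  by case: (x %/ 2 ^ n) => [|[|]].
by rewrite (divn_eq s (2 ^ n)) (divn_eq t (2 ^ n)) em (small s hs) (small t ht) eo.
Qed.

Lemma dbl_inj mu : odd mu -> injective (@dbl mu).
Proof.
move=> omu; have mu0 := odd_gt0 omu.
pose h (x : 'I_mu) : 'I_mu := Ordinal (ltn_pmod (x * (mu./2).+1) mu0).
apply: (@can_inj _ _ _ h) => x; apply: val_inj => /=.
have e : 2 * (mu./2).+1 = mu + 1.
  by rewrite -{2}(odd_double_half mu) omu -muln2; lia.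
rewrite modnMml -muln2 -mulnA e mulnDr muln1 modnMDl modn_small //.
Qed.

Definition crt (th mu : nat) (mu0 : 0 < mu) (x : 'I_(2 ^ th * mu)) : 'I_mu * 'I_(2 ^ th) :=
  (Ordinal (ltn_pmod x mu0), Ordinal (ltn_pmod x (expn_gt0 2 th))).

Lemma crt_comm th mu (mu0 : 0 < mu) x :
  crt mu0 (dbl x) = prodf (@dbl mu) (@dbl (2 ^ th)) (crt mu0 x).
Proof.
rewrite /crt /prodf /=; congr (_, _); apply: val_inj => /=.
  by rewrite -!muln2 modnMml modn_dvdm // dvdn_mull.
by rewrite -!muln2 modnMml modn_dvdm // dvdn_mulr.
Qed.

Lemma crt_bij th mu (omu : odd mu) : bijective (@crt th mu (odd_gt0 omu)).
Proof.
apply: inj_card_bij; last by rewrite card_prod !card_ord mulnC.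
move=> x y e.
have /= e1 := congr1 (fun p => nat_of_ord p.1) e.
have /= e2 := congr1 (fun p => nat_of_ord p.2) e.
apply: val_inj => /=.
have co : coprime (2 ^ th) mu by apply: coprimeXl; rewrite coprime2n.
have := chinese_remainder co x y; rewrite e1 e2 !eqxx /= => /eqP.
by rewrite !modn_small.
Qed.

Definition rvo (th mu : nat) (p : 'I_mu * 'I_(2 ^ th)) : 'I_mu * rt_V 2 th :=
  (p.1, Ordinal (revb_lt th p.2)).

Lemma rvo_comm th mu p :
  rvo (prodf (@dbl mu) (@dbl (2 ^ th)) p) = prodf (@dbl mu) (@rt_f 2 th) (@rvo th mu p).
Proof.
rewrite /rvo /prodf /=; congr (_, _); apply: val_inj => /=.
by rewrite revb_dbl divn2.
Qed.

Lemma rvo_bij th mu : bijective (@rvo th mu).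
Proof.
apply: inj_card_bij; last by rewrite /rt_V !card_prod !card_ord.
case=> a t [b u] e.
have /= e1 := congr1 (fun p => p.1) e.
have /= e2 := congr1 (fun p => nat_of_ord p.2) e.
rewrite e1.
by congr (_, _); apply: val_inj; apply: (revb_inj (ltn_ord t) (ltn_ord u) e2).
Qed.

Lemma rt_iter th n (t : rt_V 2 th) : val (iter n (@rt_f 2 th) t) = t %/ 2 ^ n.
Proof.
elim: n => [|n IH]; first by rewrite expn0 divn1.
by rewrite iterS /= IH expnS mulnC divnMA.
Qed.

Lemma rt_ground th : forall t, exists n, iter n (@rt_f 2 th) t == @rt_root 2 th two_pos.
Proof.
move=> t; exists th; apply/eqP/val_inj; rewrite rt_iter /=.
by rewrite divn_small.
Qed.

Lemma rt_gr th : @rt_f 2 th (@rt_root 2 th two_pos) = @rt_root 2 th two_pos.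
Proof. by apply: val_inj. Qed.

Theorem proposition5 (m theta mu : nat) :
  1 <= theta -> odd mu -> m = 2 ^ theta * mu ->
  union_of_cycles (@dbl mu) /\
  fg_iso (@dbl m)
    (@dsum_f (cycle_idx (@dbl mu))
       (fun C => flower_V (cycle_len C) (rt_V 2 theta))
       (fun C => @flower_f (cycle_len C) (rt_V 2 theta)
                   (@rt_f 2 theta) (@rt_root 2 theta two_pos))).
Proof.
move=> _ omu ->.
have finj := dbl_inj omu.
split; first by move=> x; rewrite fconnect_sym // fconnect1.
have [Pbij Pcomm] := @generic _ _ _ finj _ _ (rt_gr theta) (@rt_ground theta).
apply: (fg_isoP (phi := (@Phi _ _ (@dbl mu) (@rt_f 2 theta) _ (@rt_ground theta))
                      \o (@rvo theta mu \o @crt theta mu (odd_gt0 omu)))).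
  exact: bij_comp Pbij (bij_comp (rvo_bij theta mu) (crt_bij theta omu)).
by move=> x /=; rewrite crt_comm rvo_comm Pcomm.
Qed.
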